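(* Let $\mathfrak{g}$ be a filiform Lie algebra of dimension $n$ over a field $K$ of characteristic zero, with adapted basis $\{e_1,\dots,e_n\}$ and $\mathfrak{g}_i=\langle e_i,\dots,e_n\rangle$. Suppose $[\mathfrak{g}_k,\mathfrak{g}_k]=0$ for some $k\ge2$. Then $\chi(\mathfrak{g})\ge n-2(k-1)$.
   Context: A filiform Lie algebra of dimension $n$ is a nilpotent Lie algebra with $\dim\mathfrak{g}^k=n-k$ for $2\le k\le n$ (lower central series $\mathfrak{g}^1=\mathfrak{g}$, $\mathfrak{g}^{k+1}=[\mathfrak{g},\mathfrak{g}^k]$). An adapted basis is a basis $\{e_1,\dots,e_n\}$ with $[e_1,e_i]=e_{i+1}$ ($2\le i\le n-1$), $[e_1,e_n]=0$, $[e_2,e_3]\in\langle e_5,\dots,e_n\rangle$; such bases exist. For $\ell\in\mathfrak{g}^*$, $\mathfrak{g}(\ell)=\{y\in\mathfrak{g}\mid\ell([x,y])=0\ \forall x\in\mathfrak{g}\}$ and $\chi(\mathfrak{g})=\min_{\ell\in\mathfrak{g}^*}\dim\mathfrak{g}(\ell)$. *)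

(* Defs.v *)
From HB Require Import structures.
From mathcomp Require Import all_boot all_order all_algebra.
Set Implicit Arguments.
Unset Strict Implicit.
Unset Printing Implicit Defensive.
Import GRing.Theory.
Local Open Scope ring_scope.

Section Lie.
Variables (K : fieldType) (vT : vectType K).

Definition is_lie_bracket (br : vT -> vT -> vT) : Prop :=
  [/\ (forall (a : K) (x y z : vT), br (a *: x + y) z = a *: br x z + br y z),
      (forall (a : K) (x y z : vT), br x (a *: y + z) = a *: br x y + br x z),
      (forall x : vT, br x x = 0) &
      (forall x y z : vT, br x (br y z) + br y (br z x) + br z (br x y) = 0)].

(* [A, B] : the subspace spanned by all brackets [x, y], x in A, y in B
   (by bilinearity it is spanned by the brackets of basis vectors). *)
Definition lie_comm (br : vT -> vT -> vT) (A B : {vspace vT}) : {vspace vT} :=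
  (<< [seq br x y | x <- vbasis A, y <- vbasis B] >>)%VS.

Definition lcs (br : vT -> vT -> vT) (k : nat) : {vspace vT} :=
  iter k.-1 (fun A => lie_comm br fullv A) fullv.

Definition filiform (br : vT -> vT -> vT) (n : nat) : Prop :=
  [/\ \dim (fullv : {vspace vT}) = n,
      (exists m, lcs br m = 0%VS) &
      (forall k, (2 <= k <= n)%N -> \dim (lcs br k) = (n - k)%N)].

(* adapted basis e_1, ..., e_n (indexed 1..n) *)
Definition span_from (e : nat -> vT) (n i : nat) : {vspace vT} :=
  (<< [seq e j | j <- iota i (n.+1 - i)] >>)%VS.

Definition adapted_basis (br : vT -> vT -> vT) (n : nat) (e : nat -> vT) : Prop :=
  [/\ basis_of fullv [seq e i | i <- iota 1 n],
      (forall i, (2 <= i <= n.-1)%N -> br (e 1%N) (e i) = e i.+1),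
      br (e 1%N) (e n) = 0 &
      br (e 2%N) (e 3%N) \in span_from e n 5].

Definition stabilizer (br : vT -> vT -> vT) (l : 'Hom(vT, K^o)) : {vspace vT} :=
  lker (linfun (fun y : vT => (linfun (fun x : vT => l (br x y)) : 'Hom(vT, K^o)))).

End Lie.

(* Main.v *)
Require Import Defs.
From HB Require Import structures.
From mathcomp Require Import all_boot all_order all_algebra.
From mathcomp Require Import zify.
Import GRing.Theory.
Local Open Scope ring_scope.

Lemma lfunE_lin (K : fieldType) (aT rT : vectType K) (f : aT -> rT) :
  linear f -> forall u, linfun f u = f u.
Proof.
move=> fL u.
pose ff : {linear aT -> rT} := HB.pack f (GRing.isLinear.Build K aT rT *:%R f fL).
exact: (lfunE ff u).
Qed.

Section Aux.
Variables (K : fieldType) (vT : vectType K) (br : vT -> vT -> vT).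
Hypothesis hb : is_lie_bracket br.

Lemma br0l z : br 0 z = 0.
Proof.
case: hb => h1 _ _ _.
have := h1 1 0 0 z; rewrite !scale1r !addr0 => E.
by apply: (addrI (br 0 z)); rewrite -E addr0.
Qed.

Lemma br0r z : br z 0 = 0.
Proof.
case: hb => _ h2 _ _.
have := h2 1 z 0 0; rewrite !scale1r !addr0 => E.
by apply: (addrI (br z 0)); rewrite -E addr0.
Qed.

Lemma brl_lin (l : 'Hom(vT, K^o)) y : linear (fun x => l (br x y) : K^o).
Proof.
case: hb => h1 _ _ _ a u v.
by rewrite h1 linearD linearZ.
Qed.

Lemma brr_lin (C : vT -> vT) x : linear C -> linear (fun y => C (br x y)).
Proof.
case: hb => _ h2 _ _ CL a u v.
by rewrite h2 CL.
Qed.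

Lemma brl_lin' y : linear (fun x => br x y).
Proof. case: hb => h1 _ _ _ a u v; exact: h1. Qed.

Lemma brr_lin' x : linear (fun y => br x y).
Proof. case: hb => _ h2 _ _ a u v; exact: h2. Qed.

Lemma br_comm_mem (A : {vspace vT}) x y :
  x \in A -> y \in A -> br x y \in lie_comm br A A.
Proof.
move=> xA yA.
pose C := lie_comm br A A.
have H1 : forall b, b \in vbasis A -> (A <= lfun_preim (linfun (fun y => br b y)) C)%VS.
  move=> b bA; rewrite -{1}(span_basis (vbasisP A)).
  apply/span_subvP => b' b'A.
  rewrite -memv_preim lfunE_lin; last exact: brr_lin'.
  apply: memv_span; exact: allpairs_f.
have H2 : (A <= lfun_preim (linfun (fun x => br x y)) C)%VS.
  rewrite -{1}(span_basis (vbasisP A)).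
  apply/span_subvP => b bA.
  rewrite -memv_preim lfunE_lin; last exact: brl_lin'.
  have := subvP (H1 b bA) y yA.
  by rewrite -memv_preim lfunE_lin //; exact: brr_lin'.
have := subvP H2 x xA.
by rewrite -memv_preim lfunE_lin //; exact: brl_lin'.
Qed.

End Aux.

Theorem theorem6p4 (K : fieldType) (vT : vectType K) (br : vT -> vT -> vT)
  (n : nat) (e : nat -> vT) (k : nat) :
  [pchar K] =i pred0 ->
  is_lie_bracket br ->
  filiform br n ->
  adapted_basis br n e ->
  (2 <= k)%N ->
  lie_comm br (span_from e n k) (span_from e n k) = 0%VS ->
  forall l : 'Hom(vT, K^o), (n - 2 * (k - 1) <= \dim (stabilizer br l))%N.
Proof.
move=> _ hb [dimn _ _] [basX _ _ _] k2 hab l.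
have [kn|kn] := leqP k n.+1; last first.
  by have -> : (n - 2 * (k - 1) = 0)%N by lia.
set A := span_from e n k.
set X := [seq e i | i <- iota 1 n].
have spanX : (<<X>> = fullv)%VS by case/andP: basX => /eqP.
have dimA : (n <= (k - 1) + \dim A)%N.
  have eX : X = [seq e i | i <- iota 1 (k - 1)] ++ [seq e j | j <- iota k (n.+1 - k)].
    have e1 : (1 + (k-1) = k)%N by lia.
    have e2 : ((k-1) + (n.+1-k) = n)%N by lia.
    by have := iotaD 1 (k-1) (n.+1-k); rewrite e1 e2 /X => ->; rewrite map_cat.
  rewrite -dimn -spanX eX span_cat.
  apply: leq_trans (dimv_add_leqif _ _) _.
  rewrite leq_add2r; apply: leq_trans (dim_span _) _.
  by rewrite size_map size_iota.
pose g := fun y : vT => (\row_(i < k.-1) l (br (e i.+1) y)) : 'rV[K]_(k.-1).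
have gL : linear g.
  move=> a u v; apply/rowP => i; rewrite !mxE.
  by case: hb => _ h2 _ _; rewrite h2 linearD linearZ.
pose G := linfun g.
have key := limg_ker_dim G A.
have dimIm : (\dim (G @: A) <= k.-1)%N.
  apply: leq_trans (dimvS (subvf _)) _; rewrite dimvf /dim /=.
  by rewrite mul1n.
have outL : linear (fun y => linfun (fun x => l (br x y) : K^o)).
  move=> a u v; apply/lfunP => x; rewrite add_lfunE scale_lfunE !lfunE_lin;
    try exact: brl_lin.
  by case: hb => _ h2 _ _; rewrite h2 linearD linearZ.
have sub : (A :&: lker G <= stabilizer br l)%VS.
  apply/subvP => y /memv_capP [yA]; rewrite memv_ker lfunE_lin // => /eqP gy0.
  rewrite /stabilizer memv_ker lfunE_lin //.
  apply/eqP/lfunP => x; rewrite lfunE_lin; last exact: brl_lin.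
  rewrite zero_lfunE.
  suff: (fullv <= lker (linfun (fun x => l (br x y) : K^o)))%VS.
    move/subvP/(_ x (memvf x)); rewrite memv_ker lfunE_lin; last exact: brl_lin.
    by move/eqP.
  rewrite -spanX; apply/span_subvP => _ /mapP [i iI ->].
  rewrite memv_ker lfunE_lin; last exact: brl_lin.
  apply/eqP; rewrite mem_iota in iI.
  case: (ltnP i k) => ik.
    have hi : (i.-1 < k.-1)%N by lia.
    move: (congr1 (fun r : 'rV_(k.-1) => r 0 (Ordinal hi)) gy0); rewrite !mxE /=.
    by rewrite prednK //; lia.
  have eiA : e i \in A.
    apply: memv_span; apply: map_f; rewrite mem_iota; lia.
  have := @br_comm_mem K vT br hb _ _ _ eiA yA; rewrite hab memv0 => /eqP ->.
  exact: linear0.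
have := dimvS sub; lia.
Qed.
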